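(* Let $(G,+,p)$ be a valued Abelian group. (I) $G$ is of class $\mathcal{O}_0$ if and only if $G$ admits no nonzero bounded group homomorphism into a Banach space. (II) $G$ is of class $\mathcal{O}_\infty$ if and only if $G$ admits an isometric group homomorphism into a Banach space. (III) $G$ is of class $\mathcal{O}_1$ if and only if $G$ admits a nonexpansive group homomorphism with trivial kernel into a Banach space, if and only if $G$ admits a bounded group homomorphism with trivial kernel into a Banach space.
   Context: A value on an Abelian group $G$ is $p\colon G\to[0,\infty)$ with $p(x)=0\iff x=0$, $p(-x)=p(x)$, $p(x+y)\leqslant p(x)+p(y)$. For $x\in G$ let $p_{0*}(x)=\lim_{n\to\infty}p(nx)/n$ (this limit exists). $G$ is of class $\mathcal{O}_0$ if $p_{0*}\equiv0$; of class $\mathcal{O}_\infty$ if $p_{0*}=p$ (equivalently $p(kx)=|k|p(x)$ for all $k\in\mathbb{Z}$, $x\in G$); of class $\mathcal{O}_1$ if $p_{0*}$ is a value (i.e. $p_{0*}(x)=0$ only for $x=0$). A modulus of continuity is a monotone increasing, subadditive $\omega\colon[0,\infty)\to[0,\infty)$ with $\lim_{t\to0^+}\omega(t)=\omega(0)=0$. A group homomorphism $\psi$ from $G$ into a Banach space $E$ is bounded if there is a modulus of continuity $\omega$ with $\|\psi(x)\|\leqslant\omega(p(x))$ for all $x\in G$; it is nonexpansive if $\|\psi(x)\|\leqslant p(x)$ for all $x$; isometric if $\|\psi(x)\|=p(x)$ for all $x$. *)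

(* Defs.v *)
From HB Require Import structures.
From mathcomp Require Import all_boot all_order all_algebra.
From mathcomp Require Import all_classical all_reals all_analysis.
Set Implicit Arguments. Unset Strict Implicit. Unset Printing Implicit Defensive.
Import Order.TTheory GRing.Theory Num.Theory.
Import numFieldNormedType.Exports.
Local Open Scope classical_set_scope.
Local Open Scope ring_scope.

Definition is_value {R : realType} {G : zmodType} (p : G -> R) : Prop :=
  (forall x, 0 <= p x) /\
  (forall x, p x = 0 <-> x = 0) /\
  (forall x, p (- x) = p x) /\
  (forall x y, p (x + y) <= p x + p y).

(* p_{0*}(x) = lim_{n -> oo} p(n x)/n  (index shifted to n.+1 to avoid n = 0) *)
Definition p0star {R : realType} {G : zmodType} (p : G -> R) (x : G) : R :=
  limn (fun n : nat => p (x *+ n.+1) / n.+1%:R).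

Definition class_O0 {R : realType} {G : zmodType} (p : G -> R) : Prop :=
  forall x, p0star p x = 0.
Definition class_Oinf {R : realType} {G : zmodType} (p : G -> R) : Prop :=
  forall x, p0star p x = p x.
Definition class_O1 {R : realType} {G : zmodType} (p : G -> R) : Prop :=
  is_value (p0star p).

Definition modulus_of_continuity {R : realType} (w : R -> R) : Prop :=
  (forall t, 0 <= t -> 0 <= w t) /\
  (forall s t, 0 <= s -> s <= t -> w s <= w t) /\
  (forall s t, 0 <= s -> 0 <= t -> w (s + t) <= w s + w t) /\
  w 0 = 0 /\
  (w t @[t --> 0^'+] --> 0).

Definition is_group_hom {G H : zmodType} (f : G -> H) : Prop :=
  forall x y, f (x + y) = f x + f y.

Definition bounded_hom {R : realType} {G : zmodType} {E : normedModType R}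
  (p : G -> R) (psi : G -> E) : Prop :=
  is_group_hom psi /\
  exists w : R -> R, modulus_of_continuity w /\ forall x, `|psi x| <= w (p x).

Definition nonexpansive_hom {R : realType} {G : zmodType} {E : normedModType R}
  (p : G -> R) (psi : G -> E) : Prop :=
  is_group_hom psi /\ forall x, `|psi x| <= p x.

Definition isometric_hom {R : realType} {G : zmodType} {E : normedModType R}
  (p : G -> R) (psi : G -> E) : Prop :=
  is_group_hom psi /\ forall x, `|psi x| = p x.

Definition trivial_kernel {G H : zmodType} (f : G -> H) : Prop :=
  forall x, f x = 0 -> x = 0.

(* Main.v *)
Require Import Defs.
From HB Require Import structures.
From mathcomp Require Import all_boot all_order all_algebra.
From mathcomp Require Import all_classical all_reals all_analysis.
From mathcomp Require Import ring lra.
Import Order.TTheory GRing.Theory Num.Theory.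
Import numFieldNormedType.Exports.
Local Open Scope ring_scope.
Set Implicit Arguments. Unset Strict Implicit. Unset Printing Implicit Defensive.

Section Linf.
Variables (R : realType) (I : Type).
Local Open Scope classical_set_scope.

Record linf := Linf { lf : I -> R ; lf_bnd : exists M : R, forall i, `|lf i| <= M }.

HB.instance Definition _ := gen_eqMixin linf.
HB.instance Definition _ := gen_choiceMixin linf.

Lemma linf_eq (u v : linf) : lf u = lf v -> u = v.
Proof.
case: u => f hf; case: v => g hg /= efg; subst g.
by rewrite (Prop_irrelevance hf hg).
Qed.

Lemma lbnd0 : exists M : R, forall i : I, `|(0:R)| <= M.
Proof. by exists 0 => i; rewrite normr0. Qed.
Lemma lbndN (u : linf) : exists M : R, forall i, `|- lf u i| <= M.
Proof. by case: (lf_bnd u) => M hM; exists M => i; rewrite normrN. Qed.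
Lemma lbndD (u v : linf) : exists M : R, forall i, `|lf u i + lf v i| <= M.
Proof.
case: (lf_bnd u) => M hM; case: (lf_bnd v) => N hN; exists (M + N) => i.
by rewrite (le_trans (ler_normD _ _)) // lerD.
Qed.
Lemma lbndZ (a : R) (u : linf) : exists M : R, forall i, `|a * lf u i| <= M.
Proof.
case: (lf_bnd u) => M hM; exists (`|a| * M) => i.
by rewrite normrM ler_wpM2l.
Qed.

Definition lzero := Linf lbnd0.
Definition lopp u := Linf (lbndN u).
Definition ladd u v := Linf (lbndD u v).
Definition lscale a u := Linf (lbndZ a u).

Lemma laddA : associative ladd.
Proof. by move=> u v w; apply: linf_eq; apply: funext => i /=; rewrite addrA. Qed.
Lemma laddC : commutative ladd.
Proof. by move=> u v; apply: linf_eq; apply: funext => i /=; rewrite addrC. Qed.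
Lemma ladd0 : left_id lzero ladd.
Proof. by move=> u; apply: linf_eq; apply: funext => i /=; rewrite add0r. Qed.
Lemma laddN : left_inverse lzero lopp ladd.
Proof. by move=> u; apply: linf_eq; apply: funext => i /=; rewrite addNr. Qed.

HB.instance Definition _ := GRing.isZmodule.Build linf laddA laddC ladd0 laddN.

Lemma lscaleA a b v : lscale a (lscale b v) = lscale (a * b) v.
Proof. by apply: linf_eq; apply: funext => i /=; rewrite mulrA. Qed.
Lemma lscale1 : left_id 1 lscale.
Proof. by move=> u; apply: linf_eq; apply: funext => i /=; rewrite mul1r. Qed.
Lemma lscaleDr : right_distributive lscale +%R.
Proof. by move=> a u v; apply: linf_eq; apply: funext => i /=; rewrite mulrDr. Qed.
Lemma lscaleDl v : {morph lscale^~ v : a b / a + b}.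
Proof. by move=> a b; apply: linf_eq; apply: funext => i /=; rewrite mulrDl. Qed.

HB.instance Definition _ := GRing.Zmodule_isLmodule.Build R linf lscaleA lscale1 lscaleDr lscaleDl.

Definition lset (u : linf) : set R := [set `|lf u i| | i in setT] `|` [set 0].

Lemma lset_ub u : has_ubound (lset u).
Proof.
case: (lf_bnd u) => M hM; exists (Num.max M 0) => x [[i _ <-]|->].
  by rewrite le_max hM.
by rewrite le_max lexx orbT.
Qed.

Definition lnorm u := sup (lset u).

Lemma lnorm_ub u i : `|lf u i| <= lnorm u.
Proof. by apply: (ub_le_sup (lset_ub u)); left; exists i. Qed.
Lemma lnorm_ge0 u : 0 <= lnorm u.
Proof. by apply: (ub_le_sup (lset_ub u)); right. Qed.
Lemma lnorm_le u c : 0 <= c -> (forall i, `|lf u i| <= c) -> lnorm u <= c.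
Proof.
move=> c0 hc; apply: ge_sup; first by exists 0; right.
by move=> x [[i _ <-]|->].
Qed.

Lemma lnormD u v : lnorm (u + v) <= lnorm u + lnorm v.
Proof.
apply: lnorm_le; first by rewrite addr_ge0 // lnorm_ge0.
move=> i; rewrite (le_trans (ler_normD (lf u i) (lf v i))) //.
by rewrite lerD ?lnorm_ub.
Qed.

Lemma lnormZ (a : R) u : lnorm (a *: u) = `|a| * lnorm u.
Proof.
have H1 : forall a u, lnorm (a *: u) <= `|a| * lnorm u.
  move=> b w; apply: lnorm_le; first by rewrite mulr_ge0 // lnorm_ge0.
  by move=> i /=; rewrite normrM ler_wpM2l // lnorm_ub.
apply/eqP; rewrite eq_le H1 /=.
have [->|a0] := eqVneq a 0; first by rewrite normr0 mul0r lnorm_ge0.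
have e : u = a^-1 *: (a *: u).
  by apply: linf_eq; apply: funext => i /=; rewrite mulrA mulVf // mul1r.
rewrite {1}e (le_trans (ler_wpM2l _ (H1 _ _))) //.
by rewrite mulrA normrV ?unitfE // mulfV ?normr_eq0 // mul1r.
Qed.

Lemma lnorm0 u : lnorm u = 0 -> u = 0.
Proof.
move=> h; apply: linf_eq; apply: funext => i /=.
by apply/eqP; rewrite -normr_le0 -h lnorm_ub.
Qed.

HB.instance Definition _ := Lmodule_isNormed.Build R linf lnormD lnormZ lnorm0.

End Linf.

Section LinfComplete.
Variables (R : realType) (I : Type).
Local Open Scope classical_set_scope.

Lemma linf_normE (u : linf R I) : `|u| = lnorm u.
Proof. by []. Qed.

Lemma lf_ball (c u : linf R I) (e : R) i : ball c e u -> `|lf c i - lf u i| < e.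
Proof.
rewrite -ball_normE /= => h; apply: le_lt_trans h.
exact: (lnorm_ub (c - u) i).
Qed.

Lemma linf_complete (F : set_system (linf R I)) : ProperFilter F -> cauchy F -> cvg F.
Proof.
move=> FF /cauchyP Fc.
have Fic : forall i, cauchy ((fun u => lf u i) @ F).
  move=> i; apply/cauchyP => e e0.
  have [c Fc'] := Fc e e0; exists (lf c i).
  suff H : F [set u | ball (lf c i) e (lf u i)] by [].
  apply: filterS Fc' => u hu /=; rewrite -ball_normE /=.
  exact: lf_ball hu.
pose g i := lim ((fun u => lf u i) @ F).
have gcv : forall i, (fun u => lf u i) @ F --> g i.
  by move=> i; apply: (cauchy_cvg _ (Fic i)).
have key : forall c e, 0 < e -> F (ball c e) -> forall i, `|lf c i - g i| <= e.
  move=> c e e0 Fce i.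
  have h1 : g i <= lf c i + e.
    apply: (cvgr_to_le (gcv i)); apply: filterS Fce => u /(lf_ball i).
    by rewrite ltr_distlC => /andP[_ /ltW].
  have h2 : lf c i - e <= g i.
    apply: (cvgr_to_ge (gcv i)); apply: filterS Fce => u /(lf_ball i).
    by rewrite ltr_distlC => /andP[/ltW].
  by rewrite ler_distlC h1 h2.
have gb : exists M : R, forall i, `|g i| <= M.
  have [c Fc1] := Fc 1 ltr01; exists (lnorm c + 1) => i.
  have := key c 1 ltr01 Fc1 i => h.
  have -> : g i = lf c i + - (lf c i - g i) by rewrite opprB addrCA subrr addr0.
  rewrite (le_trans (ler_normD _ _)) //.
  by rewrite normrN lerD ?lnorm_ub.
apply/cvg_ex; exists (Linf gb); apply/cvg_ballP => e e0.
have e30 : 0 < e / 3 by rewrite divr_gt0.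
have [c Fce] := Fc _ e30; have Fce2 := Fce.
apply: filterS Fce => u hu.
rewrite -ball_normE /=.
apply: (@le_lt_trans _ _ (e / 3 + e / 3)).
  apply: lnorm_le; first by rewrite addr_ge0 // ltW.
  move=> i /=.
  have -> : g i - lf u i = - (lf c i - g i) + (lf c i - lf u i).
    by rewrite opprB addrA subrK.
  rewrite (le_trans (ler_normD _ _)) // normrN.
  rewrite lerD //; first exact: (key c _ e30 Fce2 i).
  exact/ltW/lf_ball.
lra.
Qed.

End LinfComplete.

HB.instance Definition _ (R : realType) (I : Type) :=
  Uniform_isComplete.Build (linf R I) (@linf_complete R I).


Section InfHelpers.
Variable R : realType.
Local Open Scope classical_set_scope.

Lemma infI_le (T : Type) (A : set T) (f : T -> R) (c : R) t :
  (forall s, A s -> c <= f s) -> A t -> inf (f @` A) <= f t.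
Proof.
move=> hc At; apply: ge_inf; last by exists t.
by exists c => _ [s As <-]; apply: hc.
Qed.

Lemma le_infI (T : Type) (A : set T) (f : T -> R) (c : R) t :
  A t -> (forall s, A s -> c <= f s) -> c <= inf (f @` A).
Proof.
move=> At hc; apply: lb_le_inf; first by exists (f t), t.
by move=> _ [s As <-]; apply: hc.
Qed.

End InfHelpers.

Section HahnBanach.
Variables (R : realType) (G : zmodType).
Local Open Scope classical_set_scope.

Definition subadd (r : G -> R) := forall x y, r (x + y) <= r x + r y.
Definition homog (r : G -> R) := forall x n, r (x *+ n) = r x *+ n.

Lemma homog0 r : homog r -> r 0 = 0.
Proof. by move=> h; have := h 0 0%N; rewrite !mulr0n. Qed.

Lemma lowb r : subadd r -> homog r -> forall y, - r (- y) <= r y.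
Proof.
move=> s h y; have := s y (- y); rewrite subrr homog0 //; lra.
Qed.

Definition Tx (r : G -> R) (x y : G) : R :=
  inf [set r (y + x *+ n) - r x *+ n | n in [set: nat]].

Section Tprops.
Variables (r : G -> R) (sr : subadd r) (hr : homog r) (x : G).

Lemma Tx_lb y n : - r (- y) <= r (y + x *+ n) - r x *+ n.
Proof.
rewrite -hr; have := sr (y + x *+ n) (- y).
rewrite addrC addKr; lra.
Qed.

Lemma Tx_le y n : Tx r x y <= r (y + x *+ n) - r x *+ n.
Proof. by apply: (infI_le (c := - r (- y))) => // m _; apply: Tx_lb. Qed.

Lemma Tx_ge y c : (forall n, c <= r (y + x *+ n) - r x *+ n) -> c <= Tx r x y.
Proof. by move=> h; apply: (le_infI (t := 0%N)) => // n _; apply: h. Qed.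

Lemma Tx_le_r y : Tx r x y <= r y.
Proof. by have := Tx_le y 0; rewrite !mulr0n addr0 subr0. Qed.

Lemma Tx_neg : Tx r x (- x) <= - r x.
Proof. by have := Tx_le (- x) 1; rewrite !mulr1n addNr homog0 // sub0r. Qed.

Lemma Tx_subadd : subadd (Tx r x).
Proof.
move=> y z.
have H : forall n m, Tx r x (y + z) <= (r (y + x *+ n) - r x *+ n) + (r (z + x *+ m) - r x *+ m).
  move=> n m; apply: (le_trans (Tx_le _ (n + m))).
  have := sr (y + x *+ n) (z + x *+ m).
  rewrite addrACA -mulrnDr mulrnDr; lra.
have H2 : forall m, Tx r x (y + z) - (r (z + x *+ m) - r x *+ m) <= Tx r x y.
  move=> m; apply: Tx_ge => n; have := H n m; lra.
suff : Tx r x (y + z) - Tx r x y <= Tx r x z by lra.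
apply: Tx_ge => m; have := H2 m; lra.
Qed.

Lemma Tx_homog : homog (Tx r x).
Proof.
move=> y k; case: k => [|k].
  rewrite !mulr0n; apply/eqP; rewrite eq_le; apply/andP; split.
    by have := Tx_le_r 0; rewrite (homog0 hr).
  by apply: Tx_ge => n; have := Tx_lb 0 n; rewrite oppr0 (homog0 hr) oppr0.
have K0 : 0 < k.+1%:R :> R by rewrite ltr0Sn.
apply/eqP; rewrite eq_le; apply/andP; split.
  have H : Tx r x (y *+ k.+1) / k.+1%:R <= Tx r x y.
    apply: Tx_ge => n; rewrite ler_pdivrMr //.
    apply: (le_trans (Tx_le _ (n * k.+1))).
    by rewrite !mulrnA -mulrnDl hr -mulrnBl mulr_natr.
  by move: H; rewrite ler_pdivrMr // mulr_natr.
apply: Tx_ge => n.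
have H1 := Tx_le y n.
have H2 : Tx r x y *+ k.+1 <= (r (y + x *+ n) - r x *+ n) *+ k.+1.
  by rewrite ler_pMn2r.
apply: (le_trans H2).
have E1 : r (y + x *+ n) *+ k.+1 = r (y *+ k.+1 + x *+ n + x *+ (n * k)).
  by rewrite -hr mulrnDl -mulrnA mulnS mulrnDr addrA.
have E2 : r x *+ n *+ k.+1 = r x *+ n + r x *+ (n * k).
  by rewrite -mulrnA mulnS mulrnDr.
have E3 := sr (y *+ k.+1 + x *+ n) (x *+ (n * k)).
rewrite hr in E3.
rewrite mulrnBl E1 E2; lra.
Qed.

End Tprops.
End HahnBanach.

Section HahnBanach2.
Variables (R : realType) (G : zmodType).
Local Open Scope classical_set_scope.

Definition Sgood (r0 r : G -> R) := [/\ subadd r, homog r & forall y, r y <= r0 y].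

Lemma chain_lb (r0 : G -> R) (C : set (G -> R)) : C r0 ->
  (forall r, C r -> Sgood r0 r) ->
  (forall r1 r2, C r1 -> C r2 -> (forall y, r1 y <= r2 y) \/ (forall y, r2 y <= r1 y)) ->
  Sgood r0 (fun y => inf [set r y | r in C]) /\
  forall r, C r -> forall y, inf [set r' y | r' in C] <= r y.
Proof.
move=> Cr0 CS Ctot.
have lbC : forall y r, C r -> - r0 (- y) <= r y.
  move=> y r Cr; have [sr hr rle] := CS r Cr.
  apply: le_trans (lowb sr hr y); rewrite lerN2; exact: rle.
have gle : forall r, C r -> forall y, inf [set r' y | r' in C] <= r y.
  by move=> r Cr y; apply: (infI_le (c := - r0 (- y))) => // s Cs; apply: lbC.
have gge : forall y c, (forall r, C r -> c <= r y) -> c <= inf [set r' y | r' in C].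
  by move=> y c h; apply: (le_infI (t := r0)).
split => //; split.
- move=> y z.
  have H : forall r1 r2, C r1 -> C r2 ->
      inf [set r' (y + z) | r' in C] <= r1 y + r2 z.
    move=> r1 r2 C1 C2; have [s1 _ _] := CS r1 C1; have [s2 _ _] := CS r2 C2.
    case: (Ctot r1 r2 C1 C2) => h.
      apply: (le_trans (gle r1 C1 _)); apply: (le_trans (s1 y z)).
      by rewrite lerD2l.
    apply: (le_trans (gle r2 C2 _)); apply: (le_trans (s2 y z)).
    by rewrite lerD2r.
  have H2 : forall r2, C r2 -> inf [set r' (y + z) | r' in C] - r2 z <= inf [set r' y | r' in C].
    by move=> r2 C2; apply: gge => r1 C1; rewrite lerBlDr; apply: H.
  rewrite -lerBlDl; apply: gge => r2 C2; rewrite lerBlDl -lerBlDr; exact: H2.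
- move=> y [|k].
    rewrite !mulr0n; apply/eqP; rewrite eq_le; apply/andP; split.
      by apply: (le_trans (gle r0 Cr0 0)); have [_ h _] := CS r0 Cr0; rewrite (homog0 h).
    by apply: gge => r Cr; have [_ h _] := CS r Cr; rewrite (homog0 h).
  apply/eqP; rewrite eq_le; apply/andP; split.
    have H : inf [set r' (y *+ k.+1) | r' in C] / k.+1%:R <= inf [set r' y | r' in C].
      apply: gge => r Cr; rewrite ler_pdivrMr ?ltr0Sn //.
      have [_ h _] := CS r Cr; rewrite mulr_natr -h; exact: gle.
    by move: H; rewrite ler_pdivrMr ?ltr0Sn // mulr_natr.
  apply: gge => r Cr; have [_ h _] := CS r Cr; rewrite h ler_pMn2r //.
  exact: gle.
- move=> y; exact: gle.
Qed.

Lemma hahn_banach (q : G -> R) : subadd q -> homog q -> forall x0,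
  exists f : G -> R, (forall x y, f (x + y) = f x + f y) /\
    (forall y, f y <= q y) /\ f x0 = q x0.
Proof.
move=> sq hq x0.
pose r0 := Tx q x0.
have Sr0 : Sgood r0 r0 by split; [exact: Tx_subadd|exact: Tx_homog|].
pose T := {r : G -> R | Sgood r0 r}.
pose Rl (s t : T) := `[< forall y, sval t y <= sval s y >].
have [t tmax] : exists t : T, forall s, Rl t s -> s = t.
  apply: (@Zorn T Rl).
  - by move=> s; apply/asboolP.
  - move=> a b c /asboolP h1 /asboolP h2; apply/asboolP => y.
    exact: le_trans (h2 y) (h1 y).
  - move=> [a Sa] [b Sb] /asboolP h1 /asboolP h2; apply: eq_exist.
    apply: funext => y; apply/eqP; rewrite eq_le; apply/andP; split; [exact: h2|exact: h1].
  - move=> A Atot.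
    pose C := [set r | r = r0 \/ exists2 s, A s & sval s = r].
    have CS : forall r, C r -> Sgood r0 r.
      by move=> r [->|[s _ <-]] //; exact: (svalP s).
    have Ctot : forall r1 r2, C r1 -> C r2 ->
        (forall y, r1 y <= r2 y) \/ (forall y, r2 y <= r1 y).
      move=> r1 r2 C1 C2.
      case: C1 => [->|[s1 As1 <-]].
        by right => y; have [_ _ h] := CS r2 C2; exact: h.
      case: C2 => [->|[s2 As2 <-]].
        by left => y; have [_ _ h] := svalP s1; exact: h.
      case: (Atot s1 s2 As1 As2) => /asboolP h; [right|left] => y; exact: h.
    have [Sg gle] := chain_lb (or_introl erefl) CS Ctot.
    exists (exist _ _ Sg) => s As; apply/asboolP => y /=.
    by apply: gle; right; exists s.
have [sr hr rle] := svalP t.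
set r := sval t in sr hr rle.
have Tr : forall x, Tx r x = r.
  move=> x.
  have S1 : Sgood r0 (Tx r x).
    split; [exact: Tx_subadd|exact: Tx_homog|] => y.
    exact: le_trans (Tx_le_r sr hr x y) (rle y).
  have Rlt : Rl t (exist _ _ S1) by apply/asboolP => y /=; apply: Tx_le_r.
  by have := tmax _ Rlt => /(f_equal sval).
have rN : forall x, r (- x) = - r x.
  move=> x; apply/eqP; rewrite eq_le; apply/andP; split.
    by have := Tx_neg sr hr x; rewrite Tr.
  by have := lowb sr hr x; rewrite lerNl.
exists r; split; last split.
- move=> x y; apply/eqP; rewrite eq_le sr /=.
  have := sr (- x) (- y); rewrite -opprD !rN; lra.
- by move=> y; apply: le_trans (rle y) (Tx_le_r sq hq x0 y).
- apply/eqP; rewrite eq_le; apply/andP; split.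
    by apply: le_trans (rle x0) (Tx_le_r sq hq x0 x0).
  have := le_trans (rle (- x0)) (Tx_neg sq hq x0); rewrite rN; lra.
Qed.

End HahnBanach2.

Section Fekete.
Variables (R : realType) (G : zmodType) (p : G -> R) (hp : is_value p).
Local Open Scope classical_set_scope.

Lemma p_ge0 x : 0 <= p x. Proof. by case: hp. Qed.
Lemma p_eq0 x : p x = 0 <-> x = 0. Proof. by case: hp => _ []. Qed.
Lemma pN x : p (- x) = p x. Proof. by case: hp => _ [_ []]. Qed.
Lemma pD x y : p (x + y) <= p x + p y. Proof. by case: hp => _ [_ [_]]. Qed.
Lemma p0 : p 0 = 0. Proof. exact/p_eq0. Qed.

Lemma pMn x n : p (x *+ n) <= p x *+ n.
Proof.
elim: n => [|n IH]; first by rewrite !mulr0n p0.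
by rewrite !mulrS (le_trans (pD _ _)) // lerD2l.
Qed.

Definition pa x n := p (x *+ n.+1) / n.+1%:R.
Definition pL x := inf [set pa x n | n in [set: nat]].

Lemma pa_ge0 x n : 0 <= pa x n.
Proof. by rewrite /pa divr_ge0 // p_ge0. Qed.

Lemma pL_le x n : pL x <= pa x n.
Proof. by apply: (infI_le (c := 0)) => // k _; apply: pa_ge0. Qed.

Lemma pL_ge x c : (forall n, c <= pa x n) -> c <= pL x.
Proof. by move=> h; apply: (le_infI (t := 0%N)) => // n _; apply: h. Qed.

Lemma pL_ge0 x : 0 <= pL x.
Proof. by apply: pL_ge => n; apply: pa_ge0. Qed.

Lemma pa_key x m N :
  pa x N <= pa x m + (m.+1%:R * p x) * N.+1%:R^-1.
Proof.
set M := m.+1; set N1 := N.+1; set q := (N1 %/ M)%N; set r := (N1 %% M)%N.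
have M0 : 0 < M%:R :> R by rewrite ltr0Sn.
have N0 : 0 < N1%:R :> R by rewrite ltr0Sn.
have e : x *+ N1 = x *+ M *+ q + x *+ r.
  by rewrite -mulrnA -mulrnDr mulnC -divn_eq.
have h0 : p (x *+ N1) <= p (x *+ M) *+ q + p x *+ r.
  by rewrite e (le_trans (pD _ _)) // lerD // pMn.
set A := p (x *+ M).
have A0 : 0 <= A by apply: p_ge0.
have P0 : 0 <= p x by apply: p_ge0.
have h1 : A *+ q <= A * N1%:R / M%:R.
  rewrite ler_pdivlMr // -[A *+ q]mulr_natr -mulrA ler_wpM2l // -natrM ler_nat.
  exact: leq_divM.
have h2 : p x *+ r <= M%:R * p x.
  rewrite -[p x *+ r]mulr_natl ler_wpM2r // ler_nat; exact/ltnW/ltn_pmod.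
rewrite /pa -/N1 -/M -/A ler_pdivrMr // mulrDl mulfVK ?gt_eqF //.
rewrite mulrAC; apply: (le_trans h0); exact: lerD.
Qed.

Lemma fekete x : pa x n @[n --> \oo] --> pL x.
Proof.
apply/cvgrPdist_lt => e e0.
have e20 : 0 < e / 2 by rewrite divr_gt0.
have [_ [m _ <-] hm] : exists2 v, [set pa x n | n in [set: nat]] v & v < pL x + e / 2.
  apply: inf_adherent => //; split; first by exists (pa x 0), 0%N.
  by exists 0 => _ [n _ <-]; apply: pa_ge0.
have hc : (m.+1%:R * p x) * harmonic n @[n --> \oo] --> 0.
  by rewrite -(mulr0 (m.+1%:R * p x)); apply: cvgMl_tmp; apply: cvg_harmonic.
have hl : \forall t \near \oo, m.+1%:R * p x * harmonic t < e / 2 := cvgr_lt _ hc _ e20.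
near=> N.
suff hN : m.+1%:R * p x * harmonic N < e / 2.
  have := pa_key x m N; have := pL_le x N.
  rewrite /harmonic /= in hN.
  rewrite distrC ger0_norm; last by rewrite subr_ge0 pL_le.
  move: hN hm; set t := _ / N.+1%:R; set a := pa x m; set b := pa x N; set c := pL x.
  clearbody t a b c.
  lra.
near: N; exact: hl.
Unshelve. all: by end_near. Qed.

Lemma p0s_eq x : p0star p x = pL x.
Proof. by rewrite /p0star; apply: cvg_lim => //; apply: fekete. Qed.


End Fekete.

Section P0props.
Variables (R : realType) (G : zmodType) (p : G -> R) (hp : is_value p).
Local Open Scope classical_set_scope.

Lemma pL_leN x N : (0 < N)%N -> pL p x <= p (x *+ N) / N%:R.
Proof. by case: N => // n _; apply: (pL_le hp). Qed.

Lemma pL_geN x c : (forall N, (0 < N)%N -> c <= p (x *+ N) / N%:R) -> c <= pL p x.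
Proof. by move=> h; apply: pL_ge => n; apply: h. Qed.

Lemma pL_lep x : pL p x <= p x.
Proof. by have := pL_leN x (ltn0Sn 0); rewrite mulr1n divr1. Qed.

Lemma pL_N x : pL p (- x) = pL p x.
Proof.
by rewrite /pL /pa; congr inf; apply: eq_imagel => n _; rewrite mulNrn (pN hp).
Qed.

Lemma pL_homog : homog (pL p).
Proof.
move=> x [|k].
  rewrite !mulr0n; apply/eqP; rewrite eq_le (pL_ge0 hp) andbT.
  by apply: (le_trans (pL_le hp 0 0)); rewrite /pa mul0rn (p0 hp) mul0r.
have K0 : 0 < k.+1%:R :> R by rewrite ltr0Sn.
apply/eqP; rewrite eq_le; apply/andP; split.
  have H : pL p (x *+ k.+1) / k.+1%:R <= pL p x.
    apply: pL_geN => N N0.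
    have N0' : 0 < N%:R :> R by rewrite ltr0n.
    rewrite ler_pdivrMr //.
    apply: (le_trans (pL_leN _ N0)).
    rewrite -mulrnA mulnC mulrnA.
    rewrite mulrAC ler_pM2r ?invr_gt0 // mulr_natr; exact: (pMn hp).
  by move: H; rewrite ler_pdivrMr // mulr_natr.
apply: pL_geN => N N0.
have NK0 : (0 < N * k.+1)%N by rewrite muln_gt0 N0.
have N0' : 0 < N%:R :> R by rewrite ltr0n.
have h := pL_leN x NK0.
rewrite ler_pdivlMr ?ltr0n // natrM mulrA in h.
rewrite -[pL p x *+ _]mulr_natr ler_pdivlMr // mulrAC -mulrnA mulnC.
exact: h.
Qed.

End P0props.

Section P0props2.
Variables (R : realType) (G : zmodType) (p : G -> R) (hp : is_value p).
Local Open Scope classical_set_scope.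

Lemma pL_subadd : subadd (pL p).
Proof.
move=> x y.
have cxy := @fekete _ _ _ hp (x + y).
have cx := @fekete _ _ _ hp x.
have cy := @fekete _ _ _ hp y.
have c : (pa p (x + y) - (pa p x + pa p y)) n @[n --> \oo] --> pL p (x + y) - (pL p x + pL p y).
  exact: (cvgB cxy (cvgD cx cy)).
rewrite -subr_le0; apply: (cvgr_to_le c); apply: nearW => n /=.
rewrite subr_le0 /pa -mulrDl ler_pM2r ?invr_gt0 ?ltr0Sn //.
by rewrite mulrnDl (pD hp).
Qed.

Lemma modulus_lin (w : R -> R) : modulus_of_continuity w ->
  forall t, 0 <= t -> w t <= (t + 1) * w 1.
Proof.
move=> [w0 [wmon [wsub [ww0 _]]]] t t0.
have wn : forall n : nat, w n%:R <= w 1 *+ n.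
  elim => [|n IH]; first by rewrite ww0 mulr0n.
  rewrite -addn1 natrD mulrnDr mulr1n (le_trans (wsub _ _ _ _)) ?ler0n //.
  by rewrite lerD2r.
set k := Num.trunc t.
have h1 : t <= k.+1%:R by apply: ltW; rewrite -truncn_le_nat.
have h2 : k%:R <= t by rewrite truncn_le.
apply: (le_trans (wmon _ _ t0 h1)); apply: (le_trans (wn _)).
rewrite -mulr_natl ler_wpM2r ?w0 ?ler01 //.
by rewrite -addn1 natrD lerD2r.
Qed.

Lemma psiMn (E : normedModType R) (psi : G -> E) : is_group_hom psi ->
  forall x n, psi (x *+ n) = psi x *+ n.
Proof.
move=> hpsi x; elim => [|n IH].
  have h := hpsi 0 0; rewrite addr0 in h; rewrite !mulr0n.
  by apply: (addrI (psi 0)); rewrite addr0 -h.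
by rewrite !mulrS hpsi IH.
Qed.

Lemma bounded_pL (E : normedModType R) (psi : G -> E) : bounded_hom p psi ->
  exists c : R, 0 <= c /\ forall x, `|psi x| <= c * pL p x.
Proof.
move=> [hpsi [w [wm hw]]].
have w10 : 0 <= w 1 by case: wm => h _; apply: h.
exists (w 1); split => // x.
have key : forall n, `|psi x| <= w 1 * pa p x n + w 1 * harmonic n.
  move=> n; rewrite /harmonic /pa /= -mulrDr.
  have N0 : 0 < n.+1%:R :> R by rewrite ltr0Sn.
  have -> : p (x *+ n.+1) / n.+1%:R + n.+1%:R^-1 = (p (x *+ n.+1) + 1) / n.+1%:R.
    by rewrite mulrDl mul1r.
  rewrite mulrA ler_pdivlMr // mulr_natr -normrMn -psiMn //.
  apply: (le_trans (hw _)); rewrite mulrC.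
  exact: (modulus_lin wm (p_ge0 hp _)).
have c1 := @fekete _ _ _ hp x.
have c2 : w 1 * pa p x n + w 1 * harmonic n @[n --> \oo] --> w 1 * pL p x + w 1 * 0.
  apply: cvgD; apply: cvgMl_tmp => //; exact: cvg_harmonic.
rewrite mulr0 addr0 in c2.
apply: (cvgr_to_ge c2); exact: nearW.
Qed.

End P0props2.

Section Main.
Variables (R : realType) (G : zmodType).
Local Open Scope classical_set_scope.

Lemma embed (q : G -> R) : subadd q -> homog q -> (forall x, q (- x) = q x) ->
  exists psi : G -> linf R G, is_group_hom psi /\ forall x, `|psi x| = q x.
Proof.
move=> sq hq qN.
have [F hF] := choice (hahn_banach sq hq).
have Fadd a : forall x y, F a (x + y) = F a x + F a y by case: (hF a).
have F0 a : F a 0 = 0.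
  by have := Fadd a 0 0; rewrite addr0 => h; apply: (addrI (F a 0)); rewrite addr0 -h.
have FN a x : F a (- x) = - F a x.
  by apply: (addrI (F a x)); rewrite -Fadd !subrr F0.
have q0 : forall x, 0 <= q x.
  move=> x; have := sq x (- x); rewrite subrr (homog0 hq) qN; lra.
have Fb : forall a x, `|F a x| <= q x.
  move=> a x; have [_ [h _]] := hF a; rewrite ler_norml h andbT.
  by have := h (- x); rewrite FN qN lerNl.
pose psi x := Linf (ex_intro (fun M => forall a, `|F a x| <= M) (q x) (fun a => Fb a x)).
exists psi; split.
  by move=> x y; apply: linf_eq; apply: funext => a /=; rewrite Fadd.
move=> x; rewrite linf_normE; apply/eqP; rewrite eq_le; apply/andP; split.
  by apply: lnorm_le => // a; apply: Fb.
have := lnorm_ub (psi x) x; rewrite /=.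
by have [_ [_ ->]] := hF x; rewrite ger0_norm.
Qed.

Lemma id_modulus : modulus_of_continuity (fun t : R => t).
Proof.
split => //; split => //; split => //; split => //.
by apply: cvg_at_right_filter; exact: cvg_id.
Qed.

Lemma nonexp_bounded (p : G -> R) (E : normedModType R) (psi : G -> E) :
  nonexpansive_hom p psi -> bounded_hom p psi.
Proof.
by move=> [h1 h2]; split => //; exists (fun t => t); split => //; exact: id_modulus.
Qed.

End Main.

Unset Implicit Arguments.

Theorem theorem2p10 (R : realType) (G : zmodType) (p : G -> R) (hp : is_value p) :
  (class_O0 p <->
     ~ exists (E : completeNormedModType R) (psi : G -> E),
         bounded_hom p psi /\ exists x, psi x <> 0) /\
  (class_Oinf p <->
     exists (E : completeNormedModType R) (psi : G -> E), isometric_hom p psi) /\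
  ((class_O1 p <->
     exists (E : completeNormedModType R) (psi : G -> E),
       nonexpansive_hom p psi /\ trivial_kernel psi) /\
   (class_O1 p <->
     exists (E : completeNormedModType R) (psi : G -> E),
       bounded_hom p psi /\ trivial_kernel psi)).
Proof.
have p0E : p0star p = pL p by apply: funext => x; apply: p0s_eq.
have Qs := pL_subadd hp.
have Qh := pL_homog hp.
have QN := pL_N hp.
have Qp := pL_lep hp.
have Q0 := pL_ge0 hp.
have emb := embed Qs Qh QN.
have bO1 : forall (E : completeNormedModType R) (psi : G -> E),
    bounded_hom p psi -> trivial_kernel psi -> class_O1 p.
  move=> E psi hb hk; rewrite /class_O1 p0E.
  have [c [c0 hc]] := bounded_pL hp hb.
  split => //; split; last by split.
  move=> x; split => [Qx0|->]; last by rewrite (homog0 Qh).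
  apply: hk; apply/normr0_eq0/eqP; rewrite eq_le normr_ge0 andbT.
  by have := hc x; rewrite Qx0 mulr0.
have O1ne : class_O1 p -> exists (E : completeNormedModType R) (psi : G -> E),
       nonexpansive_hom p psi /\ trivial_kernel psi.
  rewrite /class_O1 p0E => [[_ [hv _]]].
  have [psi [hpsi npsi]] := emb.
  exists (linf R G), psi; split; first by split => // x; rewrite npsi.
  by move=> x h; apply/hv; rewrite -npsi h normr0.
split; [|split; [|split]].
- split.
  + move=> O0 [E [psi [hb [x hx]]]]; apply: hx.
    have [c [c0 hc]] := bounded_pL hp hb.
    apply/normr0_eq0/eqP; rewrite eq_le normr_ge0 andbT.
    by have := hc x; rewrite -p0s_eq // O0 mulr0.
  + move=> H x; rewrite p0E; apply: contra_notP H => Hx.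
    have [psi [hpsi npsi]] := emb.
    exists (linf R G), psi; split.
      by apply: nonexp_bounded; split => // y; rewrite npsi.
    by exists x => h; apply: Hx; rewrite -npsi h normr0.
- split.
  + move=> Oinf.
    have pQ : forall x, p x = pL p x by move=> x; rewrite -p0s_eq // Oinf.
    have ph : homog p by move=> x n; rewrite !pQ Qh.
    have [psi [hpsi npsi]] := embed (pD hp) ph (pN hp).
    by exists (linf R G), psi.
  + move=> [E [psi [hpsi npsi]]] x.
    have ph : forall n, p (x *+ n) = p x *+ n.
      by move=> n; rewrite -!npsi psiMn // normrMn.
    rewrite p0s_eq //; apply/eqP; rewrite eq_le; apply/andP; split.
      by apply: Qp.
    by apply: pL_ge => n; rewrite /pa ph -[p x *+ _]mulr_natr mulfK ?pnatr_eq0.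
- split => // -[E [psi [hne hk]]]; exact: (bO1 E psi (nonexp_bounded hne) hk).
- split => [H|[E [psi [hb hk]]]]; last exact: (bO1 E psi hb hk).
  have [E [psi [hne hk]]] := O1ne H.
  by exists E, psi; split => //; apply: nonexp_bounded.
Qed.
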